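(* Let $A$ (in $\mathcal H$) and $B$ (in $\mathcal K$) be closed densely defined operators with $A\dashv B$ via a bounded intertwining operator $T$, and assume that $T^{-1}$ is everywhere defined and bounded. Then $\rho(A)\setminus\sigma_p(B)\subseteq\rho(B)$ and $\rho(B)\setminus\sigma_r(A)\subseteq\rho(A)$.
   Context: A bounded operator $T:\mathcal H\to\mathcal K$ is a bounded intertwining operator for $A$ and $B$ if $T D(A)\subseteq D(B)$ and $BT\xi=TA\xi$ for all $\xi\in D(A)$. $A\dashv B$ (quasi-similarity) means there is a bounded intertwining operator $T$ for $A$ and $B$ that is injective with densely defined inverse $T^{-1}$. Spectral notions: $\rho(A)$ = set of $\lambda$ with $A-\lambda I$ injective and $(A-\lambda I)^{-1}$ bounded everywhere defined; $\sigma_p$ = set of eigenvalues; $\sigma_r(A)$ = set of $\lambda$ with $A-\lambda I$ injective and non-dense range. *)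

(* Defs.v *)
From Stdlib Require Import Reals.
Open Scope R_scope.

Record Cplx : Type := mkC { Re : R; Im : R }.
Definition C0 : Cplx := mkC 0 0.
Definition C1 : Cplx := mkC 1 0.
Definition Cadd (a b : Cplx) : Cplx := mkC (Re a + Re b) (Im a + Im b).
Definition Copp (a : Cplx) : Cplx := mkC (- Re a) (- Im a).
Definition Cmul (a b : Cplx) : Cplx :=
  mkC (Re a * Re b - Im a * Im b) (Re a * Im b + Im a * Re b).
Definition Cconj (a : Cplx) : Cplx := mkC (Re a) (- Im a).

Record Hilbert : Type := {
  hcar :> Type;
  hzero : hcar;
  hadd : hcar -> hcar -> hcar;
  hopp : hcar -> hcar;
  hscal : Cplx -> hcar -> hcar;
  hinner : hcar -> hcar -> Cplx;
  hadd_assoc : forall x y z, hadd x (hadd y z) = hadd (hadd x y) z;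
  hadd_comm : forall x y, hadd x y = hadd y x;
  hadd_zero : forall x, hadd x hzero = x;
  hadd_opp : forall x, hadd x (hopp x) = hzero;
  hscal_one : forall x, hscal C1 x = x;
  hscal_mul : forall a b x, hscal (Cmul a b) x = hscal a (hscal b x);
  hscal_addv : forall a x y, hscal a (hadd x y) = hadd (hscal a x) (hscal a y);
  hscal_adds : forall a b x, hscal (Cadd a b) x = hadd (hscal a x) (hscal b x);
  hinner_add : forall x y z, hinner (hadd x y) z = Cadd (hinner x z) (hinner y z);
  hinner_scal : forall a x y, hinner (hscal a x) y = Cmul a (hinner x y);
  hinner_conj : forall x y, hinner y x = Cconj (hinner x y);
  hinner_pos : forall x, 0 <= Re (hinner x x);
  hinner_def : forall x, hinner x x = C0 -> x = hzero;
  hcomplete : forall u : nat -> hcar,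
    (forall eps, 0 < eps -> exists N, forall m n, (N <= m)%nat -> (N <= n)%nat ->
        sqrt (Re (hinner (hadd (u m) (hopp (u n))) (hadd (u m) (hopp (u n))))) < eps) ->
    exists l, forall eps, 0 < eps -> exists N, forall n, (N <= n)%nat ->
        sqrt (Re (hinner (hadd (u n) (hopp l)) (hadd (u n) (hopp l)))) < eps
}.

Arguments hzero {h}.
Arguments hadd {h}.
Arguments hopp {h}.
Arguments hscal {h}.
Arguments hinner {h}.

Definition hsub {H : Hilbert} (x y : H) : H := hadd x (hopp y).
Definition hnorm {H : Hilbert} (x : H) : R := sqrt (Re (hinner x x)).

Definition hconv {H : Hilbert} (u : nat -> H) (l : H) : Prop :=
  forall eps, 0 < eps -> exists N, forall n, (N <= n)%nat -> hnorm (hsub (u n) l) < eps.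

Definition dense {H : Hilbert} (S : H -> Prop) : Prop :=
  forall x eps, 0 < eps -> exists y, S y /\ hnorm (hsub x y) < eps.

(* An operator from H to K is a relation A with A x y meaning
   "x is in D(A) and A x = y". *)
Definition Op (H K : Hilbert) : Type := H -> K -> Prop.

Definition dom {H K : Hilbert} (A : Op H K) (x : H) : Prop := exists y, A x y.
Definition ran {H K : Hilbert} (A : Op H K) (y : K) : Prop := exists x, A x y.

Definition linear_op {H K : Hilbert} (A : Op H K) : Prop :=
  (forall x y1 y2, A x y1 -> A x y2 -> y1 = y2) /\
  A hzero hzero /\
  (forall x1 y1 x2 y2, A x1 y1 -> A x2 y2 -> A (hadd x1 x2) (hadd y1 y2)) /\
  (forall a x y, A x y -> A (hscal a x) (hscal a y)).

Definition densely_defined {H K : Hilbert} (A : Op H K) : Prop := dense (dom A).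

Definition closed_op {H K : Hilbert} (A : Op H K) : Prop :=
  forall (u : nat -> H) (v : nat -> K) x y,
    (forall n, A (u n) (v n)) -> hconv u x -> hconv v y -> A x y.

Definition closed_densely_defined {H K : Hilbert} (A : Op H K) : Prop :=
  linear_op A /\ densely_defined A /\ closed_op A.

Definition op_injective {H K : Hilbert} (A : Op H K) : Prop :=
  forall x1 x2 y, A x1 y -> A x2 y -> x1 = x2.

Definition op_inv {H K : Hilbert} (A : Op H K) : Op K H := fun y x => A x y.

Definition everywhere_defined {H K : Hilbert} (A : Op H K) : Prop :=
  forall x, dom A x.

Definition bounded_op {H K : Hilbert} (A : Op H K) : Prop :=
  exists c, forall x y, A x y -> hnorm y <= c * hnorm x.

Definition graph {H K : Hilbert} (T : H -> K) : Op H K := fun x y => y = T x.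

Definition bounded_linear {H K : Hilbert} (T : H -> K) : Prop :=
  linear_op (graph T) /\ bounded_op (graph T).

(* A - lambda I, with domain D(A) *)
Definition op_shift {H : Hilbert} (A : Op H H) (l : Cplx) : Op H H :=
  fun x z => exists y, A x y /\ z = hsub y (hscal l x).

Definition intertwines {H K : Hilbert} (T : H -> K) (A : Op H H) (B : Op K K) : Prop :=
  bounded_linear T /\
  (forall x, dom A x -> dom B (T x)) /\
  (forall x y, A x y -> B (T x) (T y)).

Definition quasi_similar_via {H K : Hilbert} (T : H -> K) (A : Op H H) (B : Op K K) : Prop :=
  intertwines T A B /\ op_injective (graph T) /\ densely_defined (op_inv (graph T)).

Definition resolvent_set {H : Hilbert} (A : Op H H) (l : Cplx) : Prop :=
  op_injective (op_shift A l) /\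
  everywhere_defined (op_inv (op_shift A l)) /\
  bounded_op (op_inv (op_shift A l)).

Definition point_spectrum {H : Hilbert} (A : Op H H) (l : Cplx) : Prop :=
  exists x, x <> hzero /\ op_shift A l x hzero.

Definition residual_spectrum {H : Hilbert} (A : Op H H) (l : Cplx) : Prop :=
  op_injective (op_shift A l) /\ ~ dense (ran (op_shift A l)).

(* Main.v *)
Require Import Defs.
From Stdlib Require Import Reals Lra Psatz Classical ClassicalEpsilon.
Open Scope R_scope.

Lemma Cplx_eq (a b : Cplx) : Re a = Re b -> Im a = Im b -> a = b.
Proof. destruct a, b; simpl; intros -> ->; reflexivity. Qed.

Lemma hadd_0l {H : Hilbert} (x : H) : hadd hzero x = x.
Proof. rewrite hadd_comm. apply hadd_zero. Qed.

Lemma hadd_cancel {H : Hilbert} (x y z : H) : hadd x y = hadd x z -> y = z.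
Proof.
  intros E.
  rewrite <- (hadd_0l y), <- (hadd_0l z).
  rewrite <- (hadd_opp _ x), (hadd_comm _ x (hopp x)).
  rewrite <- !hadd_assoc, E. reflexivity.
Qed.

Lemma hopp_unique {H : Hilbert} (x y : H) : hadd x y = hzero -> y = hopp x.
Proof. intros E. apply (hadd_cancel x). rewrite E, hadd_opp. reflexivity. Qed.

Lemma hscal_zero {H : Hilbert} a : hscal a (@hzero H) = hzero.
Proof.
  apply (hadd_cancel (hscal a hzero)).
  rewrite <- hscal_addv, !hadd_zero. reflexivity.
Qed.

Lemma hscal_opp {H : Hilbert} a (x : H) : hscal a (hopp x) = hopp (hscal a x).
Proof. apply hopp_unique. rewrite <- hscal_addv, hadd_opp. apply hscal_zero. Qed.

Lemma hadd_interchange {H : Hilbert} (a b c d : H) :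
  hadd (hadd a b) (hadd c d) = hadd (hadd a c) (hadd b d).
Proof.
  rewrite <- (hadd_assoc _ a b), (hadd_assoc _ b c d), (hadd_comm _ b c),
    <- (hadd_assoc _ c b d), (hadd_assoc _ a c). reflexivity.
Qed.

Lemma hopp_add {H : Hilbert} (x y : H) : hopp (hadd x y) = hadd (hopp x) (hopp y).
Proof.
  symmetry. apply hopp_unique.
  rewrite hadd_interchange, !hadd_opp, hadd_zero. reflexivity.
Qed.

Lemma hopp_opp {H : Hilbert} (x : H) : hopp (hopp x) = x.
Proof. symmetry. apply hopp_unique. rewrite hadd_comm. apply hadd_opp. Qed.

Lemma hopp_zero {H : Hilbert} : hopp (@hzero H) = hzero.
Proof. symmetry. apply hopp_unique. apply hadd_zero. Qed.

Lemma hsub_add_add {H : Hilbert} (a b c d : H) :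
  hsub (hadd a b) (hadd c d) = hadd (hsub a c) (hsub b d).
Proof. unfold hsub. rewrite hopp_add. apply hadd_interchange. Qed.

Lemma hsub_sub_sub {H : Hilbert} (a b c d : H) :
  hsub (hsub a b) (hsub c d) = hsub (hsub a c) (hsub b d).
Proof. unfold hsub. rewrite !hopp_add, !hopp_opp. apply hadd_interchange. Qed.

Lemma hscal_sub {H : Hilbert} l (x y : H) :
  hscal l (hsub x y) = hsub (hscal l x) (hscal l y).
Proof. unfold hsub. rewrite hscal_addv, hscal_opp. reflexivity. Qed.

Lemma hsub_self {H : Hilbert} (x : H) : hsub x x = hzero.
Proof. apply hadd_opp. Qed.

Lemma hsub_eq0 {H : Hilbert} (x y : H) : hsub x y = hzero -> x = y.
Proof.
  intros E. pose proof (hopp_unique x (hopp y) E) as E2.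
  rewrite <- (hopp_opp x), <- (hopp_opp y), E2. reflexivity.
Qed.

Lemma hsub_zero_r {H : Hilbert} (x : H) : hsub x hzero = x.
Proof. unfold hsub. rewrite hopp_zero. apply hadd_zero. Qed.

Lemma hsub_swap {H : Hilbert} (x y : H) : hsub y x = hopp (hsub x y).
Proof. unfold hsub. rewrite hopp_add, hopp_opp, hadd_comm. reflexivity. Qed.

Lemma hsub_addK {H : Hilbert} (z a : H) : hsub (hadd z a) a = z.
Proof. unfold hsub. rewrite <- hadd_assoc, hadd_opp, hadd_zero. reflexivity. Qed.

Lemma hadd_subK {H : Hilbert} (y a : H) : hadd (hsub y a) a = y.
Proof.
  unfold hsub. rewrite <- hadd_assoc, (hadd_comm _ (hopp a) a), hadd_opp, hadd_zero.
  reflexivity.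
Qed.

Definition Cm1 : Cplx := mkC (-1) 0.

Lemma hscal_C0 {H : Hilbert} (x : H) : hscal Defs.C0 x = hzero.
Proof.
  apply (hadd_cancel (hscal Defs.C0 x)). rewrite <- hscal_adds, hadd_zero.
  f_equal. apply Cplx_eq; simpl; ring.
Qed.

Lemma hscal_m1 {H : Hilbert} (x : H) : hscal Cm1 x = hopp x.
Proof.
  apply hopp_unique. rewrite <- (hscal_one _ x) at 1. rewrite <- hscal_adds.
  replace (Cadd Defs.C1 Cm1) with Defs.C0. apply hscal_C0.
  apply Cplx_eq; simpl; ring.
Qed.

Lemma inner_im0 {H : Hilbert} (x : H) : Im (hinner x x) = 0.
Proof. pose proof (f_equal Im (hinner_conj _ x x)) as Hc. simpl in Hc. lra. Qed.

Lemma Re_inner_sym {H : Hilbert} (x y : H) : Re (hinner y x) = Re (hinner x y).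
Proof. rewrite hinner_conj. reflexivity. Qed.

Lemma Re_add_r {H : Hilbert} (x y z : H) :
  Re (hinner x (hadd y z)) = Re (hinner x y) + Re (hinner x z).
Proof.
  rewrite Re_inner_sym, hinner_add. simpl. rewrite !(Re_inner_sym x). reflexivity.
Qed.

Lemma n2_add {H : Hilbert} (x y : H) :
  Re (hinner (hadd x y) (hadd x y)) =
  Re (hinner x x) + Re (hinner y y) + 2 * Re (hinner x y).
Proof.
  rewrite hinner_add. simpl. rewrite !Re_add_r. rewrite (Re_inner_sym x y). ring.
Qed.

Lemma n2_scal {H : Hilbert} a (x : H) :
  Re (hinner (hscal a x) (hscal a x)) = (Re a * Re a + Im a * Im a) * Re (hinner x x).
Proof.
  rewrite hinner_scal, (hinner_conj _ (hscal a x) x), hinner_scal. simpl.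
  rewrite inner_im0. ring.
Qed.

Lemma Re_scal_r {H : Hilbert} t (x y : H) :
  Re (hinner x (hscal (mkC t 0) y)) = t * Re (hinner x y).
Proof.
  rewrite Re_inner_sym, hinner_scal. simpl. rewrite Re_inner_sym. ring.
Qed.

Lemma hnorm_ge0 {H : Hilbert} (x : H) : 0 <= hnorm x.
Proof. apply sqrt_pos. Qed.

Lemma CS {H : Hilbert} (x y : H) : Re (hinner x y) <= hnorm x * hnorm y.
Proof.
  unfold hnorm.
  set (a := Re (hinner x x)). set (c := Re (hinner y y)). set (b := Re (hinner x y)).
  assert (Ha : 0 <= a) by apply hinner_pos.
  assert (Hc : 0 <= c) by apply hinner_pos.
  assert (Q : forall t, 0 <= a + t * t * c + 2 * t * b).
  { intros t. pose proof (hinner_pos _ (hadd x (hscal (mkC t 0) y))) as P.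
    rewrite n2_add, n2_scal, Re_scal_r in P. fold a c b in P. simpl in P.
    replace (a + t * t * c + 2 * t * b) with (a + (t * t + 0 * 0) * c + 2 * (t * b)) by ring.
    exact P. }
  destruct (Rle_or_lt b 0) as [Hb|Hb].
  { pose proof (Rmult_le_pos _ _ (sqrt_pos a) (sqrt_pos c)). lra. }
  assert (Hbc : b * b <= a * c).
  { destruct (Req_dec c 0) as [E|E].
    - exfalso. specialize (Q (- (a + 1) / (2 * b))). rewrite E in Q.
      replace (a + - (a + 1) / (2 * b) * (- (a + 1) / (2 * b)) * 0 + 2 * (- (a + 1) / (2 * b)) * b)
        with (-1) in Q by (field; lra). lra.
    - specialize (Q (- b / c)).
      replace (a + - b / c * (- b / c) * c + 2 * (- b / c) * b) with ((a * c - b * b) / c)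
        in Q by (field; lra).
      assert (0 < c) by lra.
      apply Rmult_le_compat_r with (r := c) in Q; [|lra].
      unfold Rdiv in Q. rewrite Rmult_0_l, Rmult_assoc, Rinv_l, Rmult_1_r in Q by lra. lra. }
  rewrite <- sqrt_mult by lra. rewrite <- (sqrt_square b) by lra.
  apply sqrt_le_1_alt. exact Hbc.
Qed.

Lemma hnorm_add {H : Hilbert} (x y : H) : hnorm (hadd x y) <= hnorm x + hnorm y.
Proof.
  pose proof (CS x y) as C. unfold hnorm in *. rewrite n2_add.
  pose proof (hinner_pos _ x). pose proof (hinner_pos _ y).
  pose proof (sqrt_sqrt _ H0). pose proof (sqrt_sqrt _ H1).
  pose proof (sqrt_pos (Re (hinner x x))). pose proof (sqrt_pos (Re (hinner y y))).
  rewrite <- (sqrt_square (sqrt (Re (hinner x x)) + sqrt (Re (hinner y y)))) by lra.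
  apply sqrt_le_1_alt. nra.
Qed.

Lemma hnorm_scal {H : Hilbert} a (x : H) :
  hnorm (hscal a x) = sqrt (Re a * Re a + Im a * Im a) * hnorm x.
Proof.
  unfold hnorm. rewrite n2_scal. apply sqrt_mult. nra. apply hinner_pos.
Qed.

Lemma hnorm_opp {H : Hilbert} (x : H) : hnorm (hopp x) = hnorm x.
Proof.
  rewrite <- hscal_m1, hnorm_scal. simpl.
  replace (-1 * -1 + 0 * 0) with 1 by ring. rewrite sqrt_1. ring.
Qed.

Lemma hsub_tri {H : Hilbert} (x y z : H) : hnorm (hsub x z) <= hnorm (hsub x y) + hnorm (hsub y z).
Proof.
  replace (hsub x z) with (hadd (hsub x y) (hsub y z)). apply hnorm_add.
  unfold hsub. rewrite <- hadd_assoc, (hadd_assoc _ (hopp y) y), (hadd_comm _ (hopp y) y),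
    hadd_opp, hadd_0l. reflexivity.
Qed.

Lemma hnorm_sub_sym {H : Hilbert} (x y : H) : hnorm (hsub x y) = hnorm (hsub y x).
Proof. rewrite (hsub_swap y x), hnorm_opp. reflexivity. Qed.

Lemma bounded_nonneg {H K : Hilbert} (A : Op H K) : bounded_op A ->
  exists c, 0 <= c /\ forall x y, A x y -> hnorm y <= c * hnorm x.
Proof.
  intros [c Hc]. exists (Rabs c). split; [apply Rabs_pos|].
  intros x y Hxy. eapply Rle_trans; [apply Hc; exact Hxy|].
  apply Rmult_le_compat_r; [apply hnorm_ge0|apply Rle_abs].
Qed.

Lemma hconv_of_bound {H : Hilbert} (s : nat -> H) L M : 0 <= M ->
  (forall n, hnorm (hsub (s n) L) <= M * / (INR n + 1)) -> hconv s L.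
Proof.
  intros HM Hb eps Heps.
  destruct (archimed_cor1 (eps / (M+1))) as [N [HN HN0]].
  { apply Rdiv_lt_0_compat; lra. }
  exists N. intros n Hn.
  eapply Rle_lt_trans; [apply Hb|].
  assert (HNn : INR N <= INR n) by (apply le_INR; exact Hn).
  assert (0 < INR N) by (apply lt_0_INR; exact HN0).
  apply Rle_lt_trans with (M * / INR N).
  { apply Rmult_le_compat_l; [lra|]. apply Rinv_le_contravar; lra. }
  apply Rle_lt_trans with ((M+1) * / INR N).
  { apply Rmult_le_compat_r; [left; apply Rinv_0_lt_compat; lra| lra]. }
  apply Rmult_lt_reg_l with (/(M+1)). apply Rinv_0_lt_compat; lra.
  rewrite <- Rmult_assoc, Rinv_l by lra. rewrite Rmult_1_l.
  unfold Rdiv in HN. rewrite Rmult_comm. exact HN.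
Qed.

Section dummy. End dummy.

Lemma T_add {H K : Hilbert} (T : H -> K) (HL : linear_op (graph T)) x y :
  T (hadd x y) = hadd (T x) (T y).
Proof. destruct HL as (_&_&Ha&_). symmetry. exact (Ha x (T x) y (T y) eq_refl eq_refl). Qed.

Lemma T_zero {H K : Hilbert} (T : H -> K) (HL : linear_op (graph T)) : T hzero = hzero.
Proof. destruct HL as (_&H0&_). exact (eq_sym H0). Qed.

Lemma T_scal {H K : Hilbert} (T : H -> K) (HL : linear_op (graph T)) a x :
  T (hscal a x) = hscal a (T x).
Proof. destruct HL as (_&_&_&Hs). symmetry. exact (Hs a x (T x) eq_refl). Qed.

Lemma T_opp {H K : Hilbert} (T : H -> K) (HL : linear_op (graph T)) x :
  T (hopp x) = hopp (T x).
Proof. apply hopp_unique. rewrite <- (T_add T HL), hadd_opp. apply (T_zero T HL). Qed.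

Lemma T_sub {H K : Hilbert} (T : H -> K) (HL : linear_op (graph T)) x y :
  T (hsub x y) = hsub (T x) (T y).
Proof. unfold hsub. rewrite (T_add T HL), (T_opp T HL). reflexivity. Qed.

Lemma op_sub {H K : Hilbert} (A : Op H K) (HL : linear_op A) x y x' y' :
  A x y -> A x' y' -> A (hsub x x') (hsub y y').
Proof.
  destruct HL as (_&_&Ha&Hs). intros H1 H2. apply Ha; [exact H1|].
  rewrite <- !hscal_m1. apply Hs. exact H2.
Qed.

Lemma shift_zero {H : Hilbert} (A : Op H H) (HL : linear_op A) l :
  op_shift A l hzero hzero.
Proof.
  exists hzero. split. apply HL. rewrite hscal_zero, hsub_zero_r. reflexivity.
Qed.

Lemma shift_sub {H : Hilbert} (A : Op H H) (HL : linear_op A) l x z x' z' :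
  op_shift A l x z -> op_shift A l x' z' -> op_shift A l (hsub x x') (hsub z z').
Proof.
  intros [y [Ay ->]] [y' [Ay' ->]]. exists (hsub y y'). split.
  - apply op_sub; assumption.
  - rewrite hsub_sub_sub, hscal_sub. reflexivity.
Qed.

Lemma shift_inj {H : Hilbert} (A : Op H H) (HL : linear_op A) l :
  (forall x, op_shift A l x hzero -> x = hzero) -> op_injective (op_shift A l).
Proof.
  intros Hk x1 x2 z H1 H2. apply hsub_eq0. apply Hk.
  pose proof (shift_sub A HL l _ _ _ _ H1 H2) as Hs. rewrite hsub_self in Hs. exact Hs.
Qed.

Lemma intertwine_shift {H K : Hilbert} (T : H -> K) (A : Op H H) (B : Op K K) l x w :
  intertwines T A B -> op_shift A l x w -> op_shift B l (T x) (T w).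
Proof.
  intros [[TL _] [_ Hint]] [y [Ay ->]]. exists (T y). split.
  - apply Hint. exact Ay.
  - rewrite (T_sub T TL), (T_scal T TL). reflexivity.
Qed.

Theorem corollary3p12 (H K : Hilbert) (A : Op H H) (B : Op K K) (T : H -> K) :
  closed_densely_defined A ->
  closed_densely_defined B ->
  quasi_similar_via T A B ->
  everywhere_defined (op_inv (graph T)) ->
  bounded_op (op_inv (graph T)) ->
  (forall l : Cplx, resolvent_set A l -> ~ point_spectrum B l -> resolvent_set B l) /\
  (forall l : Cplx, resolvent_set B l -> ~ residual_spectrum A l -> resolvent_set A l).
Proof.
  intros [HAl [HAd HAc]] [HBl [HBd HBc]] [HI [Tinj Tdense]] Tev Tbd.
  pose proof HI as [[TL TB] _].
  destruct (bounded_nonneg _ TB) as [cT [cT0 HcT]].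
  destruct (bounded_nonneg _ Tbd) as [cTi [cTi0 HcTi]].
  assert (NT : forall u, hnorm (T u) <= cT * hnorm u) by (intros u; apply HcT; exact eq_refl).
  assert (NTi : forall u, hnorm u <= cTi * hnorm (T u)) by (intros u; apply HcTi; exact eq_refl).
  assert (Tsurj : forall z, exists w, z = T w).
  { intros z. destruct (Tev z) as [w Hw]. exists w. exact Hw. }
  assert (Tinj' : forall x1 x2, T x1 = T x2 -> x1 = x2).
  { intros x1 x2 E. apply (Tinj x1 x2 (T x2)); [exact (eq_sym E)| exact eq_refl]. }
  assert (Hsh : forall l x w, op_shift A l x w -> op_shift B l (T x) (T w)).
  { intros l x w Hx. exact (intertwine_shift T A B l x w HI Hx). }
  split.
  - intros l [Ainj [Aev Abd]] Hnp.
    destruct (bounded_nonneg _ Abd) as [cA [cA0 HcA]].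
    assert (Binj : op_injective (op_shift B l)).
    { apply shift_inj; [exact HBl|]. intros x Hx.
      destruct (classic (x = hzero)) as [e|ne]; [exact e|].
      exfalso; apply Hnp; exists x; split; assumption. }
    split; [exact Binj|split].
    + intros z. destruct (Tsurj z) as [w ->]. destruct (Aev w) as [x Hx].
      exists (T x). exact (Hsh _ _ _ Hx).
    + exists (cT * cA * cTi). intros z u Hu. destruct (Tsurj z) as [w ->].
      destruct (Aev w) as [x Hx].
      pose proof (Binj _ _ _ Hu (Hsh _ _ _ Hx)) as ->.
      pose proof (HcA _ _ Hx). pose proof (NT x). pose proof (NTi w).
      pose proof (hnorm_ge0 x). pose proof (hnorm_ge0 w). pose proof (hnorm_ge0 (T w)).
      apply Rle_trans with (cT * hnorm x); [assumption|].
      rewrite !Rmult_assoc. apply Rmult_le_compat_l; [assumption|].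
      apply Rle_trans with (cA * hnorm w); [assumption|].
      apply Rmult_le_compat_l; assumption.
  - intros l [Binj [Bev Bbd]] Hnr.
    destruct (bounded_nonneg _ Bbd) as [cB [cB0 HcB]].
    assert (Akern : forall x, op_shift A l x hzero -> x = hzero).
    { intros x Hx. apply Tinj'. rewrite (T_zero T TL).
      apply (Binj _ _ hzero).
      - rewrite <- (T_zero T TL). exact (Hsh _ _ _ Hx).
      - apply shift_zero; exact HBl. }
    assert (Ainj : op_injective (op_shift A l)) by (apply shift_inj; assumption).
    set (Kc := cTi * (cB * cT)).
    assert (Kc0 : 0 <= Kc) by (unfold Kc; repeat apply Rmult_le_pos; assumption).
    assert (Abelow : forall x w, op_shift A l x w -> hnorm x <= Kc * hnorm w).
    { intros x w Hx. pose proof (NTi x). pose proof (HcB _ _ (Hsh _ _ _ Hx)). pose proof (NT w).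
      unfold Kc. apply Rle_trans with (cTi * hnorm (T x)); [assumption|].
      rewrite !Rmult_assoc. apply Rmult_le_compat_l; [assumption|].
      apply Rle_trans with (cB * hnorm (T w)); [assumption|].
      apply Rmult_le_compat_l; assumption. }
    assert (Adense : dense (ran (op_shift A l))).
    { destruct (classic (dense (ran (op_shift A l)))) as [d|nd]; [exact d|].
      exfalso. apply Hnr. split; assumption. }
    split; [exact Ainj|split].
    + intros z.
      assert (sq : forall n : nat, {p : H * H | op_shift A l (fst p) (snd p) /\
                 hnorm (hsub z (snd p)) < / (INR n + 1)}).
      { intros n. apply constructive_indefinite_description.
        assert (0 < / (INR n + 1)) by (apply Rinv_0_lt_compat; pose proof (pos_INR n); lra).
        destruct (Adense z _ H0) as [w [[x Hx] Hw]]. exists (x, w). simpl; auto. }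
      set (xs := fun n => fst (proj1_sig (sq n))).
      set (ws := fun n => snd (proj1_sig (sq n))).
      assert (Hxs : forall n, op_shift A l (xs n) (ws n)) by (intros n; apply (proj2_sig (sq n))).
      assert (Hws : forall n, hnorm (hsub (ws n) z) <= 1 * / (INR n + 1)).
      { intros n. rewrite hnorm_sub_sym, Rmult_1_l. left. apply (proj2_sig (sq n)). }
      destruct (Bev (T z)) as [u Hu]. destruct (Tsurj u) as [x0 ->].
      assert (Key : forall n, hnorm (hsub (xs n) x0) <= Kc * hnorm (hsub (ws n) z)).
      { intros n. pose proof (NTi (hsub (xs n) x0)) as E1.
        rewrite (T_sub T TL) in E1.
        pose proof (HcB _ _ (shift_sub B HBl l _ _ _ _ (Hsh _ _ _ (Hxs n)) Hu)) as E2.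
        rewrite <- (T_sub T TL (ws n) z) in E2. pose proof (NT (hsub (ws n) z)) as E3.
        unfold Kc. apply Rle_trans with (cTi * hnorm (hsub (T (xs n)) (T x0))); [assumption|].
        rewrite !Rmult_assoc. apply Rmult_le_compat_l; [assumption|].
        apply Rle_trans with (cB * hnorm (T (hsub (ws n) z))); [assumption|].
        apply Rmult_le_compat_l; assumption. }
      set (ys := fun n => hadd (ws n) (hscal l (xs n))).
      assert (Hys : forall n, A (xs n) (ys n)).
      { intros n. destruct (Hxs n) as [y [Ay E]]. unfold ys. rewrite E, hadd_subK. exact Ay. }
      set (nl := sqrt (Re l * Re l + Im l * Im l)).
      assert (nl0 : 0 <= nl) by apply sqrt_pos.
      assert (Cx : hconv xs x0).
      { apply (hconv_of_bound _ _ Kc Kc0). intros n.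
        apply Rle_trans with (Kc * hnorm (hsub (ws n) z)); [apply Key|].
        pose proof (Hws n). apply Rmult_le_compat_l; [assumption|lra]. }
      assert (Cy : hconv ys (hadd z (hscal l x0))).
      { apply (hconv_of_bound _ _ (1 + nl * Kc)); [nra|]. intros n.
        unfold ys. rewrite hsub_add_add, <- hscal_sub.
        eapply Rle_trans; [apply hnorm_add|]. rewrite hnorm_scal. fold nl.
        pose proof (Key n). pose proof (Hws n). pose proof (hnorm_ge0 (hsub (ws n) z)).
        assert (0 < / (INR n + 1)) by (apply Rinv_0_lt_compat; pose proof (pos_INR n); lra).
        apply Rle_trans with ((1 + nl * Kc) * hnorm (hsub (ws n) z)).
        { assert (nl * hnorm (hsub (xs n) x0) <= nl * (Kc * hnorm (hsub (ws n) z)))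
            by (apply Rmult_le_compat_l; assumption). lra. }
        apply Rmult_le_compat_l; [nra|lra]. }
      pose proof (HAc xs ys x0 _ Hys Cx Cy) as Ax0.
      exists x0. exists (hadd z (hscal l x0)). split; [exact Ax0|].
      symmetry. apply hsub_addK.
    + exists Kc. intros w x Hx. apply Abelow. exact Hx.
Qed.
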